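(* There exist 4-GDDs of types $20^9 11^1$, $20^9 17^1$ and $20^9 23^1$.
   Context: For a set $K$ of positive integers, a $K$-GDD (group divisible design) is a triple $(V,\mathcal G,\mathcal B)$ where $V$ is a finite set, $\mathcal G$ is a partition of $V$ into subsets called groups, $\mathcal B$ is a nonempty collection of subsets of $V$ (blocks) with sizes in $K$, such that every pair of points from distinct groups lies in exactly one block and no pair of points from the same group lies in any block. A $k$-GDD means a $\{k\}$-GDD. Type $g^u m^1$ means $u$ groups of size $g$ and one group of size $m$. *)

(* Defs.v *)
From mathcomp Require Import all_boot.
Set Implicit Arguments. Unset Strict Implicit. Unset Printing Implicit Defensive.

Definition is_GDD (K : pred nat) (T : finType)
    (G : {set {set T}}) (B : {set {set T}}) : Prop :=
  [/\ partition G [set: T],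
      B != set0,
      (forall b, b \in B -> K #|b|),
      (forall x y : T, x != y -> pblock G x = pblock G y ->
         forall b, b \in B -> ~ ((x \in b) && (y \in b)))
    & (forall x y : T, pblock G x != pblock G y ->
         #|[set b in B | (x \in b) && (y \in b)]| = 1)].

Definition is_kGDD (k : nat) (T : finType) G B := @is_GDD (pred1 k) T G B.

Definition has_type_gu_m1 (T : finType) (G : {set {set T}}) (g u m : nat) : Prop :=
  exists2 G0, G0 \in G &
    [/\ #|G0| = m, #|G :\ G0| = u & forall A, A \in G :\ G0 -> #|A| = g].

Definition exists_kGDD_type (k g u m : nat) : Prop :=
  exists (T : finType) (G B : {set {set T}}),
    is_kGDD k G B /\ has_type_gu_m1 G g u m.

(* Main.v *)
Require Import Defs.
From mathcomp Require Import all_boot.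
Set Implicit Arguments. Unset Strict Implicit. Unset Printing Implicit Defensive.

Definition fb (x : nat) (b : seq nat) : seq nat :=
  if x \in b then filter (predC1 x) b else [::].
Definition nbrs (L : seq (seq nat)) x := flatten (map (fb x) L).
Definition cross n (grp : nat -> nat) x := [seq y <- iota 0 n | grp y != grp x].

Definition check n ng (grp : nat -> nat) (L : seq (seq nat)) :=
  [&& L != [::], all (fun b => count (fun k => k \in b) (iota 0 n) == 4) L,
      all (fun x => grp x < ng) (iota 0 n),
      all (fun g => has (fun x => grp x == g) (iota 0 n)) (iota 0 ng) &
      all (fun x => sort leq (nbrs L x) == cross n grp x) (iota 0 n)].

Lemma card_ordP n (P : pred nat) : #|[set x : 'I_n | P (val x)]| = count P (iota 0 n).
Proof.
rewrite cardsE cardE /enum_mem size_filter -enumT -val_enum_ord count_map.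
by apply: eq_count => x.
Qed.

Lemma mem_nbrs (L : seq (seq nat)) (x y : nat) : y \in nbrs L x -> exists2 b, b \in L & [&& x \in b, y \in b & y != x].
Proof.
case/flattenP=> s /mapP[b bL ->]; rewrite /fb; case: ifP => // xb.
by rewrite mem_filter /= => /andP[yx yb]; exists b => //; rewrite xb yb yx.
Qed.

Lemma nbrs_mem (L : seq (seq nat)) (x y : nat) (b : seq nat) : b \in L -> x \in b -> y \in b -> y != x -> y \in nbrs L x.
Proof.
move=> bL xb yb yx; apply/flattenP; exists (fb x b); first exact: map_f.
by rewrite /fb xb mem_filter /= yx.
Qed.

Lemma count_nbrs (L : seq (seq nat)) (x y : nat) :
  count_mem y (nbrs L x) = \sum_(i < size L) count_mem y (fb x (nth [::] L i)).
Proof.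
rewrite /nbrs count_flatten sumnE !big_map.
by rewrite (big_nth [::]) big_mkord.
Qed.

Lemma gdd_of_check n ng (grp : nat -> nat) (L : seq (seq nat)) gi u g0 m :
  check n ng grp L -> gi < ng -> ng = u.+1 ->
  count (fun k => grp k == gi) (iota 0 n) = m ->
  all (fun g => (g == gi) || (count (fun k => grp k == g) (iota 0 n) == g0)) (iota 0 ng) ->
  exists_kGDD_type 4 g0 u m.
Proof.
rewrite /check; case/and5P=> hne hcard hlt hhas hnb hgi hng hm hg0.
pose Gset (g : nat) := [set x : 'I_n | grp (val x) == g].
pose G := [set Gset (val g) | g : 'I_ng].
pose Bset (b : seq nat) := [set x : 'I_n | val x \in b].
pose B := [set Bset (nth [::] L (val i)) | i : 'I_(size L)].
have xn (x : 'I_n) : val x \in iota 0 n by rewrite mem_iota add0n ltn_ord.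
have GxG (x : 'I_n) : Gset (grp (val x)) \in G.
  have hx : grp (val x) < ng by exact: (allP hlt _ (xn x)).
  by apply/imsetP; exists (Ordinal hx).
have xGx (x : 'I_n) : x \in Gset (grp (val x)) by rewrite inE.
have wit g : g < ng -> exists x : 'I_n, grp (val x) = g.
  move=> hg; have /hasP[x hx /eqP gx] : has (fun x => grp x == g) (iota 0 n).
    by apply: (allP hhas); rewrite mem_iota add0n.
  have xlt : x < n by move: hx; rewrite mem_iota add0n.
  by exists (Ordinal xlt).
have Gdisj g1 g2 : Gset g1 != Gset g2 -> [disjoint Gset g1 & Gset g2].
  move=> neq; rewrite -setI_eq0; apply/eqP/setP => x; rewrite !inE.
  apply/negbTE/andP => -[/eqP h1 /eqP h2].
  by move: neq; rewrite -h1 -h2 eqxx.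
have trivG : trivIset G.
  apply/trivIsetP => A1 A2 /imsetP[g1 _ ->] /imsetP[g2 _ ->]; exact: Gdisj.
have pbG (x : 'I_n) : pblock G x = Gset (grp (val x)) by apply: def_pblock.
have pbeq (x y : 'I_n) : (pblock G x == pblock G y) = (grp (val x) == grp (val y)).
  rewrite !pbG; apply/eqP/eqP => [h|->] //.
  by have := xGx x; rewrite h inE => /eqP.
have hnbx (x : 'I_n) y : (y \in nbrs L x) = (y \in cross n grp x).
  by rewrite -(mem_sort leq) (eqP (allP hnb _ (xn x))).
have uniqc x : uniq (cross n grp x) by rewrite filter_uniq // iota_uniq.
exists 'I_n, G, B; split; last first.
  have hgin : Gset gi \in G by apply/imsetP; exists (Ordinal hgi).
  exists (Gset gi) => //; split.
  - rewrite /Gset (card_ordP n (fun k => grp k == gi)) //.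
  - have inj : injective (fun g : 'I_ng => Gset (val g)).
      move=> g1 g2 /= h; apply: val_inj.
      have [x hx] := wit _ (ltn_ord g1).
      have := xGx x; rewrite hx h inE => /eqP e; exact: etrans (esym hx) e.
    have cG : #|G| = ng by rewrite (card_imset _ inj); exact: card_ord.
    by move: cG; rewrite (cardsD1 (Gset gi)) hgin hng add1n => -[].
  - move=> A; rewrite !inE => /andP[neq /imsetP[g _ hA]].
    rewrite hA /Gset (card_ordP n (fun k => grp k == val g)).
    have : val g \in iota 0 ng by rewrite mem_iota add0n ltn_ord.
    move=> /(allP hg0) /orP[/eqP gg|/eqP //].
    by move: neq; rewrite hA gg eqxx.
split.
- rewrite /partition trivG /=; apply/andP; split.
  + apply/eqP/setP => x; rewrite inE; apply/bigcupP; exists (Gset (grp (val x))) => //.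
  + apply/imsetP => -[g _ h].
    have [x hx] := wit _ (ltn_ord g).
    by have := xGx x; rewrite hx -h inE.
- have h0 : 0 < size L by rewrite lt0n size_eq0.
  apply/set0Pn; exists (Bset (nth [::] L 0)); apply/imsetP; exists (Ordinal h0) => //.
- move=> b /imsetP[i _ ->]; rewrite /Bset (card_ordP n (fun k => k \in nth [::] L i)) /=.
  exact: allP hcard _ (mem_nth [::] (ltn_ord i)).
- move=> x y xy pxy b /imsetP[i _ ->]; rewrite !inE => /andP[xb yb].
  have : val y \in nbrs L x.
    apply: (nbrs_mem (mem_nth [::] (ltn_ord i)) xb yb).
    by rewrite val_eqE eq_sym.
  rewrite hnbx mem_filter; move: pxy => /eqP; rewrite pbeq => /eqP ->.
  by rewrite eqxx.
- move=> x y pxy.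
  have gxy : grp y != grp x by rewrite eq_sym -pbeq.
  have : val y \in nbrs L x by rewrite hnbx mem_filter gxy xn.
  case/mem_nbrs => b bL /and3P[xb yb yx].
  have il : index b L < size L by rewrite index_mem.
  pose i0 := Ordinal il.
  have hb : nth [::] L i0 = b by rewrite /= nth_index.
  suff -> : [set b0 in B | (x \in b0) && (y \in b0)] = [set Bset (nth [::] L i0)].
    by rewrite cards1.
  apply/setP => S; rewrite !inE; apply/idP/idP.
  + case/andP=> /imsetP[j _ ->] /andP; rewrite !inE => -[xj yj].
    have [->//|neq] := eqVneq j i0.
    have c1 : count_mem (val y) (cross n grp x) <= 1.
      by rewrite count_uniq_mem ?uniqc // leq_b1.
    have := c1; rewrite -(eqP (allP hnb _ (xn x))) count_sort.
    rewrite count_nbrs (bigD1 j) //= (bigD1 i0) 1?eq_sym //= hb.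
    have pos (c : seq nat) : val x \in c -> val y \in c -> 0 < count_mem (val y) (fb (val x) c).
      move=> xc yc; rewrite -has_count has_pred1 /fb xc mem_filter /= yx yc //.
    move: (pos _ xj yj) (pos _ xb yb).
    case: (count_mem _ (fb _ (nth _ _ j))) => // a _.
    case: (count_mem _ (fb _ b)) => // c _.
    by rewrite addSn addnS.
  + move/eqP=> ->; rewrite hb; apply/andP; split; first by apply/imsetP; exists i0; rewrite ?hb.
    by rewrite !inE xb yb.
Qed.

Definition d11 : seq (nat * nat * seq nat) := [:: (0, 0, [:: 0; 15; 124; 175]); (0, 0, [:: 0; 35; 73; 158]); (0, 0, [:: 12; 40; 155; 114]); (0, 0, [:: 88; 113; 44; 165]); (0, 0, [:: 1; 33; 94; 133]); (0, 0, [:: 0; 107; 109; 146]); (0, 0, [:: 80; 104; 103; 34]); (0, 0, [:: 1; 27; 43; 122]); (0, 0, [:: 0; 21; 65; 161]); (0, 0, [:: 1; 50; 147; 155]); (0, 0, [:: 2; 19; 51; 70]); (0, 0, [:: 0; 59; 87; 127]); (0, 0, [:: 0; 97; 105; 125]); (0, 0, [:: 1; 75; 99; 166]); (0, 0, [:: 0; 52; 113; 166]); (0, 0, [:: 1; 14; 17; 146]); (0, 0, [:: 0; 47; 133; 157]); (0, 0, [:: 69; 142; 119; 134]); (0, 0, [:: 0; 30; 92; 154]); (0, 0, [:: 0; 2; 14; 130]); (0, 0, [:: 0; 70; 91; 147]); (0, 0, [:: 0; 31; 48; 177]); (0, 0, [:: 0; 22; 33; 101]); (0, 0, [:: 0;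 43; 50; 150]); (0, 0, [:: 101; 59; 106; 116]); (0, 0, [:: 0; 6; 82; 98]); (0, 0, [:: 43; 127; 113; 170]); (0, 0, [:: 0; 1; 8; 12]); (0, 0, [:: 0; 17; 79; 104]); (0, 0, [:: 0; 75; 137; 167]); (0, 0, [:: 0; 13; 122; 164]); (0, 0, [:: 0; 46; 66; 89]); (0, 0, [:: 0; 26; 58; 64]); (0, 0, [:: 1; 114; 174; 175]); (0, 0, [:: 0; 41; 53; 145]); (0, 0, [:: 0; 3; 34; 67]); (0, 0, [:: 1; 115; 126; 150]); (0, 0, [:: 0; 19; 68; 106]); (0, 0, [:: 155; 51; 149; 145]); (0, 0, [:: 0; 11; 55; 96]); (0, 0, [:: 0; 49; 78; 80]); (0, 0, [:: 164; 125; 103; 23]); (0, 0, [:: 2; 15; 27; 86]); (0, 0, [:: 1; 3; 131; 135]); (0, 0, [:: 1; 18; 47; 121]); (0, 0, [:: 1; 65; 134; 162]); (2, 0, [:: 139]); (1, 0, [:: 81; 176; 82]); (2, 1, [:: 36]); (1, 1, [:: 62; 67; 29]); (3, 0, [:: 103; 1; 124]); (3, 0, [:: 21; 77; 143]); (3, 0, [:: 98; 54; 94]); (3, 0, [:: 156; 87; 116]); (3, 1, [:: 104; 124; 27]); (3, 1, [:: 93; 114; 151]); (3, 1, [:: 48; 53; 142]); (3, 1, [:: 49; 74; 71]); (3, 2, [:: 59; 69; 174]); (3, 2, [:: 51; 106; 65]); (3, 2, [:: 92; 124; 134]); (3, 2, [:: 72; 79; 109])].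

Definition d17 : seq (nat * nat * seq nat) := [:: (0, 0, [:: 2; 14; 55; 151]); (0, 0, [:: 61; 11; 0; 102]); (0, 0, [:: 0; 34; 131; 138]); (0, 0, [:: 0; 70; 71; 83]); (0, 0, [:: 0; 25; 173; 175]); (0, 0, [:: 56; 64; 121; 24]); (0, 0, [:: 0; 15; 119; 163]); (0, 0, [:: 0; 38; 82; 113]); (0, 0, [:: 0; 1; 39; 168]); (0, 0, [:: 0; 19; 98; 156]); (0, 0, [:: 1; 49; 146; 162]); (0, 0, [:: 45; 71; 178; 46]); (0, 0, [:: 174; 110; 113; 153]); (0, 0, [:: 0; 86; 94; 115]); (0, 0, [:: 0; 77; 123; 127]); (0, 0, [:: 0; 21; 96; 125]); (0, 0, [:: 0; 3; 50; 155]); (0, 0, [:: 1; 13; 35; 167]); (0, 0, [:: 1; 9; 123; 143]); (0, 0, [:: 1; 59; 99; 121]); (0, 0, [:: 0; 58; 142; 165]); (0, 0, [:: 0; 5; 30; 92]); (0, 0, [:: 1; 30; 45; 139]); (0, 0, [:: 0; 6; 16; 80]); (0, 0, [:: 0; 49; 150; 161]); (0, 0, [:: 0; 35; 109; 133]); (0, 0, [:: 0; 10; 79; 166]); (0, 0, [:: 84; 117; 14; 137]); (0, 0, [:: 2; 7; 67; 131]); (0, 0, [:: 1; 54; 87; 122]); (0, 0, [:: 0; 31; 55; 169]); (0, 0, [:: 0; 37; 101; 132]); (0, 0, [:: 1; 5; 57; 85]); (0, 0, [:: 0; 44; 139; 178]); (0, 0, [:: 0; 7; 75; 76]); (0, 0,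 [:: 7; 74; 41; 130]); (0, 0, [:: 0; 130; 147; 158]); (0, 0, [:: 0; 26; 66; 103]); (0, 0, [:: 120; 31; 86; 8]); (0, 0, [:: 0; 14; 152; 174]); (0, 0, [:: 0; 129; 143; 145]); (0, 0, [:: 1; 111; 126; 130]); (2, 0, [:: 16]); (1, 0, [:: 130; 107; 37]); (2, 1, [:: 142]); (1, 1, [:: 19; 48; 9]); (3, 0, [:: 127; 66; 53]); (3, 0, [:: 98; 61; 130]); (3, 0, [:: 165; 47; 63]); (3, 0, [:: 132; 128; 4]); (3, 1, [:: 56; 35; 163]); (3, 1, [:: 149; 108; 154]); (3, 1, [:: 177; 99; 40]); (3, 1, [:: 114; 26; 97]); (3, 2, [:: 148; 30; 125]); (3, 2, [:: 115; 121; 48]); (3, 2, [:: 129; 135; 14]); (3, 2, [:: 154; 152; 59]); (3, 3, [:: 79; 167; 87]); (3, 3, [:: 37; 128; 148]); (3, 3, [:: 144; 118; 38]); (3, 3, [:: 105; 66; 17]); (3, 4, [:: 2; 179; 130]); (3, 4, [:: 87; 57; 40]); (3, 4, [:: 120; 61; 54]); (3, 4, [:: 116; 103; 113])].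

Definition d23 : seq (nat * nat * seq nat) := [:: (0, 0, [:: 39; 137; 159; 28]); (0, 0, [:: 2; 14; 123; 134]); (0, 0, [:: 2; 3; 22; 59]); (0, 0, [:: 0; 23; 124; 154]); (0, 0, [:: 0; 53; 74; 177]); (0, 0, [:: 0; 41; 71; 178]); (0, 0, [:: 0; 8; 118; 133]); (0, 0, [:: 173; 13; 79; 141]); (0, 0, [:: 0; 12; 28; 77]); (0, 0, [:: 1; 27; 49; 179]); (0, 0, [:: 2; 23; 30; 63]); (0, 0, [:: 0; 111; 121; 159]); (0, 0, [:: 0; 29; 73; 113]); (0, 0, [:: 0; 70; 123; 167]); (0, 0, [:: 0; 86; 105; 142]); (0, 0, [:: 0; 10; 69; 148]); (0, 0, [:: 0; 4; 165; 179]); (0, 0, [:: 1; 6; 98; 153]); (0, 0, [:: 115; 21; 31; 176]); (0, 0, [:: 1; 17; 81; 130]); (0, 0, [:: 2; 67; 79; 179]); (0, 0, [:: 0; 59; 83; 106]); (0, 0, [:: 24; 122; 156; 139]); (0, 0, [:: 0; 20; 66; 95]); (0, 0, [:: 0; 127; 141; 170]); (0, 0, [:: 2; 10; 42; 106]); (0, 0, [:: 78; 34; 119; 149]); (0, 0, [:: 0; 1; 58; 158]); (0, 0, [:: 0; 5; 39; 173]); (0, 0, [:: 0; 43; 51; 84]); (0, 0, [:: 0; 26; 50; 61]); (0, 0, [:: 0; 37; 62; 149]); (0, 0, [:: 1; 14; 89; 178]); (0, 0, [:: 0; 7; 44; 174]); (0, 0, [:: 0; 24; 102; 116]); (0, 0,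 [:: 35; 64; 41; 111]); (0, 0, [:: 1; 25; 75; 139]); (0, 0, [:: 0; 67; 93; 155]); (2, 0, [:: 124]); (1, 0, [:: 15; 10; 137]); (2, 1, [:: 165]); (1, 1, [:: 0; 55; 134]); (3, 0, [:: 60; 142; 172]); (3, 0, [:: 175; 29; 133]); (3, 0, [:: 98; 140; 105]); (3, 0, [:: 111; 126; 59]); (3, 1, [:: 153; 157; 46]); (3, 1, [:: 113; 75; 56]); (3, 1, [:: 148; 59; 170]); (3, 1, [:: 102; 96; 127]); (3, 2, [:: 105; 23; 58]); (3, 2, [:: 134; 20; 96]); (3, 2, [:: 102; 88; 101]); (3, 2, [:: 175; 73; 15]); (3, 3, [:: 165; 28; 80]); (3, 3, [:: 48; 135; 151]); (3, 3, [:: 126; 71; 122]); (3, 3, [:: 133; 125; 94]); (3, 4, [:: 176; 118; 17]); (3, 4, [:: 112; 21; 127]); (3, 4, [:: 170; 95; 168]); (3, 4, [:: 85; 39; 126]); (3, 5, [:: 11; 8; 42]); (3, 5, [:: 166; 98; 81]); (3, 5, [:: 120; 137; 40]); (3, 5, [:: 157; 163; 159]); (3, 6, [:: 68; 17; 28]); (3, 6, [:: 81; 142; 48]); (3, 6, [:: 11; 50; 102]); (3, 6, [:: 25; 135; 103])].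

Definition grpf (x : nat) : nat := if x < 180 then x %% 9 else 9.
Definition devb (b : nat * nat * seq nat) : seq (seq nat) :=
  let: (ty, k, p) := b in
  match ty with
  | 0 => [seq [seq (x + 4*t) %% 180 | x <- p] | t <- iota 0 45]
  | 1 => [seq (180 + k) :: [seq (x + 4*t) %% 180 | x <- p] | t <- iota 0 45]
  | 2 => [seq (180 + k) :: [seq (head 0 p + 4*t + 60*s) %% 180 | s <- iota 0 3] | t <- iota 0 15]
  | _ => [seq (182 + 3*k + t %% 3) :: [seq (x + 4*t) %% 180 | x <- p] | t <- iota 0 45]
  end.
Definition mkL (B : seq (nat * nat * seq nat)) := flatten (map devb B).

Lemma l11 : exists_kGDD_type 4 20 9 11.
Proof.
apply: (@gdd_of_check 191 10 grpf (mkL d11) 9 9 20 11).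
all: vm_compute; reflexivity.
Qed.

Lemma l17 : exists_kGDD_type 4 20 9 17.
Proof.
apply: (@gdd_of_check 197 10 grpf (mkL d17) 9 9 20 17).
all: vm_compute; reflexivity.
Qed.

Lemma l23 : exists_kGDD_type 4 20 9 23.
Proof.
apply: (@gdd_of_check 203 10 grpf (mkL d23) 9 9 20 23).
all: vm_compute; reflexivity.
Qed.

Theorem lemma2p3 :
  [/\ exists_kGDD_type 4 20 9 11,
      exists_kGDD_type 4 20 9 17
    & exists_kGDD_type 4 20 9 23].
Proof. split; [exact: l11 | exact: l17 | exact: l23]. Qed.
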